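(* Let $\mathcal{S}_0$ and $\mathcal{S}_1$ be two MSyDSs with common node set $V$ such that every local function is a threshold function and every master function is \texttt{AND}. Let $\nu$ be the largest negative threshold value occurring among the local functions of $\mathcal{S}_0$ and $\mathcal{S}_1$. Then $\mathcal{S}_0$ and $\mathcal{S}_1$ are inequivalent if and only if there is an inequivalence witness for $\mathcal{S}_0$ and $\mathcal{S}_1$ in which at most $\nu$ nodes have state 0.
   Context: A multilayer synchronous dynamical system (MSyDS) $\mathcal{S}$ over $\mathbb{B}=\{0,1\}$ with $k\ge 1$ layers consists of: a finite node set $V$; undirected simple graphs $G_i=(V,E_i)$, $1\le i\le k$ (all layers share the node set $V$); for each layer $i$ and node $v$ a local function $f_{i,v}$ with output in $\mathbb{B}$ whose inputs are the states of the nodes in the closed neighborhood of $v$ in $G_i$ ($v$ and its neighbors in $G_i$); and for each node $v$ a master function $\psi_v:\mathbb{B}^k\to\mathbb{B}$. A configuration is a map $\mathcal{C}:V\to\mathbb{B}$; its successor is $\mathcal{C}'$ with $\mathcal{C}'(v)=\psi_v(f_{1,v}(\mathcal{C}),\dots,f_{k,v}(\mathcal{C}))$ for all $v$ (synchronous update), where $f_{i,v}(\mathcal{C})$ is $f_{i,v}$ evaluated on the states in $\mathcal{C}$ of the closed neighborhood of $v$ in $G_i$. For an integer $t\ge 0$, the $t$-threshold function equals 1 iff at least $t$ of its inputs equal 1. If the local function of node $v$ in layer $i$ is the $t$-threshold function and $v$ has degree $\delta$ in $G_i$, its negative threshold is $\delta - t + 2$ (the number of 0's among its $\delta+1$ inputs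 that makes it equal 0). \texttt{AND} is 1 iff all inputs are 1. Two MSyDSs on the same node set are equivalent if every configuration has the same successor under both, and inequivalent otherwise. An inequivalence witness is a configuration of $V$ whose successors under the two systems differ. *)

(* Defs.v *)
From mathcomp Require Import all_boot all_order all_algebra.
Unset Strict Implicit. Unset Printing Implicit Defensive.

Record MSyDS (V : finType) := {
  nlayers : nat;
  layer : 'I_nlayers -> rel V;
  local : 'I_nlayers -> V -> (V -> bool) -> bool;
  master : V -> {ffun 'I_nlayers -> bool} -> bool
}.
Arguments nlayers {V} S : rename.
Arguments layer {V} S i : rename.
Arguments local {V} S i v C : rename.
Arguments master {V} S v b : rename.

Definition config (V : finType) := V -> bool.

Definition closed_nbhd {V : finType} (S : MSyDS V) (i : 'I_(nlayers S)) (v : V)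
  : {set V} := [set u | (u == v) || layer S i v u].

Definition degree {V : finType} (S : MSyDS V) (i : 'I_(nlayers S)) (v : V) : nat :=
  #|[set u | layer S i v u]|.

Definition wf_MSyDS {V : finType} (S : MSyDS V) : Prop :=
  [/\ 0 < nlayers S,
      (forall i, symmetric (layer S i)),
      (forall i, irreflexive (layer S i)) &
      (forall i v (C D : config V),
         {in closed_nbhd S i v, C =1 D} -> local S i v C = local S i v D)].

Definition successor {V : finType} (S : MSyDS V) (C : config V) : config V :=
  fun v => master S v [ffun i => local S i v C].

Definition threshold_fn {V : finType} (S : MSyDS V) (i : 'I_(nlayers S)) (v : V)
  (t : nat) (C : config V) : bool :=
  t <= #|[set u in closed_nbhd S i v | C u]|.

Definition threshold_AND {V : finType} (S : MSyDS V)
  (thr : 'I_(nlayers S) -> V -> nat) : Prop :=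
  (forall i v C, local S i v C = threshold_fn S i v (thr i v) C) /\
  (forall v (b : {ffun 'I_(nlayers S) -> bool}), master S v b = [forall i, b i]).

Definition neg_threshold {V : finType} (S : MSyDS V)
  (thr : 'I_(nlayers S) -> V -> nat) (i : 'I_(nlayers S)) (v : V) : int :=
  ((degree S i v)%:Z - (thr i v)%:Z + 2)%R.

Definition equivalent {V : finType} (S0 S1 : MSyDS V) : Prop :=
  forall C : config V, successor S0 C =1 successor S1 C.

Definition inequivalence_witness {V : finType} (S0 S1 : MSyDS V) (C : config V) : Prop :=
  exists v, successor S0 C v != successor S1 C v.

Definition num_zeros {V : finType} (C : config V) : nat := #|[set v | ~~ C v]|.

Definition is_max_neg_threshold {V : finType} (S0 S1 : MSyDS V)
  (thr0 : 'I_(nlayers S0) -> V -> nat) (thr1 : 'I_(nlayers S1) -> V -> nat)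
  (nu : int) : Prop :=
  [/\ (forall i v, (neg_threshold S0 thr0 i v <= nu)%R),
      (forall i v, (neg_threshold S1 thr1 i v <= nu)%R) &
      ((exists i v, neg_threshold S0 thr0 i v = nu) \/
       (exists i v, neg_threshold S1 thr1 i v = nu))].

(* Main.v *)
Require Import Defs.
From mathcomp Require Import all_boot all_order all_algebra.
From mathcomp Require Import zify.
From Stdlib Require Import Classical.

Lemma subset_of_size (T : finType) (A : {set T}) m : m <= #|A| ->
  exists Z : {set T}, Z \subset A /\ #|Z| = m.
Proof.
move=> hm; exists [set x in take m (enum A)]; split.
  by apply/subsetP=> x; rewrite inE => /mem_take; rewrite mem_enum.
rewrite cardsE; move/card_uniqP: (take_uniq m (enum_uniq (mem A))) => ->.
by rewrite size_take -cardE; case: ltngtP hm => //= ->.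
Qed.

Arguments subset_of_size {T A m} _.

Lemma succE (V : finType) (S : MSyDS V) thr C v : threshold_AND S thr ->
  successor S C v = [forall i, threshold_fn S i v (thr i v) C].
Proof.
move=> [hl hm]; rewrite /successor hm; apply: eq_forallb => i.
by rewrite ffunE hl.
Qed.

Arguments succE {V S thr} C v _.

Lemma nbhd_le (V : finType) (S : MSyDS V) i v :
  #|closed_nbhd S i v| <= (degree S i v).+1.
Proof.
have -> : closed_nbhd S i v = v |: [set u | layer S i v u].
  by apply/setP=> u; rewrite !inE.
by rewrite cardsU1 /degree; case: (_ \notin _).
Qed.

Arguments nbhd_le {V} S i v.

Lemma key (V : finType) (A B : MSyDS V) thrA thrB (nu : int) :
  wf_MSyDS A -> threshold_AND A thrA -> threshold_AND B thrB ->
  (forall i v, (neg_threshold A thrA i v <= nu)%R) ->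
  (forall i v, (neg_threshold B thrB i v <= nu)%R) ->
  forall C v, successor A C v -> ~~ successor B C v ->
  exists C' : config V, inequivalence_witness A B C' /\ ((num_zeros C')%:Z <= nu)%R.
Proof.
move=> [k0 _ _ _] tA tB hA hB C v sA sB.
rewrite (succE _ _ tB) negb_forall in sB; case/existsP: sB => i hi.
rewrite /threshold_fn -ltnNge in hi.
set N := closed_nbhd B i v in hi.
set Zc := [set u in N | ~~ C u].
have hsplit : #|[set u in N | C u]| + #|Zc| = #|N|.
  rewrite -(cardsID [set u | C u] N); congr (_ + _); apply: eq_card => u;
  by rewrite !inE andbC.
set m := (#|N| + 1 - thrB i v)%N.
have hm : m <= #|Zc| by rewrite /m; lia.
case: (subset_of_size hm) => Z [ZZc cZ].
have ZN : Z \subset N.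
  apply: subset_trans ZZc _; apply/subsetP => u; rewrite inE; by case/andP.
pose C' : config V := fun u => u \notin Z.
have CC' : forall u, C u -> C' u.
  move=> u Cu; apply/negP => uZ; move/subsetP: ZZc => /(_ u uZ).
  by rewrite inE Cu andbF.
have sA' : successor A C' v.
  rewrite (succE _ _ tA) in sA; rewrite (succE _ _ tA); apply/forallP => j.
  move/forallP: sA => /(_ j); rewrite /threshold_fn => h.
  apply: (leq_trans h); apply: subset_leq_card; apply/subsetP => u.
  rewrite !inE => /andP [-> /CC' ->]; by [].
have sB' : ~~ successor B C' v.
  rewrite (succE _ _ tB) negb_forall; apply/existsP; exists i.
  rewrite /threshold_fn -ltnNge.
  have -> : [set u in closed_nbhd B i v | C' u] = N :\: Z.
    by apply/setP => u; rewrite !inE andbC.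
  rewrite cardsD (setIidPr ZN) cZ /m; lia.
exists C'; split.
  by exists v; rewrite sA'; move: sB'; case: (successor B C' v).
have -> : num_zeros C' = m.
  rewrite /num_zeros -cZ; apply: eq_card => u; by rewrite !inE negbK.
have nu1 : (1 <= nu)%R.
  rewrite (succE _ _ tA) in sA'; move/forallP: sA' => /(_ (Ordinal k0)).
  rewrite /threshold_fn => h.
  have hs : [set u in closed_nbhd A (Ordinal k0) v | C' u] \subset closed_nbhd A (Ordinal k0) v.
    by apply/subsetP=> u; rewrite inE => /andP[].
  have h1 := leq_trans h (leq_trans (subset_leq_card hs) (nbhd_le A (Ordinal k0) v)).
  have := hA (Ordinal k0) v; rewrite /neg_threshold; lia.
have := hB i v; have := nbhd_le B i v; rewrite /neg_threshold -/N /m; lia.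
Qed.

Arguments key {V A B thrA thrB nu} _ _ _ _ _ {C v} _ _.

Theorem lemma5p3 (V : finType) (S0 S1 : MSyDS V)
  (thr0 : 'I_(nlayers S0) -> V -> nat) (thr1 : 'I_(nlayers S1) -> V -> nat)
  (nu : int) :
  wf_MSyDS S0 -> wf_MSyDS S1 ->
  threshold_AND S0 thr0 -> threshold_AND S1 thr1 ->
  is_max_neg_threshold S0 S1 thr0 thr1 nu ->
  (~ equivalent S0 S1 <->
   exists C : config V, inequivalence_witness S0 S1 C /\ ((num_zeros C)%:Z <= nu)%R).
Proof.
move=> w0 w1 t0 t1 [h0 h1 _]; split; last first.
  by case=> C [[v hv] _] he; move: hv; rewrite he eqxx.
move=> ne.
have [C hC] : exists C, ~ (successor S0 C =1 successor S1 C).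
  by apply: not_all_ex_not.
have [v hv] : exists v, successor S0 C v != successor S1 C v.
  apply: NNPP => hn; apply: hC => v; apply/eqP; apply: NNPP => hv.
  by apply: hn; exists v; apply/negP.
case e0: (successor S0 C v) hv => hv.
  have e1 : ~~ successor S1 C v by move: hv; case: (successor S1 C v).
  exact: (key w0 t0 t1 h0 h1 e0 e1).
have e1 : successor S1 C v by move: hv; case: (successor S1 C v).
have [C' [[u hu] hz]] := key w1 t1 t0 h1 h0 e1 (negbT e0).
by exists C'; split => //; exists u; rewrite eq_sym.
Qed.
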